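(* Let $I$ be a compact interval, $J\subseteq I$ a nonempty open interval, $S\subseteq\mathrm{Homeo}_+(I)$ a finite set, $\tau\in(0,1)$, and $(s_n)_{n\ge1}$ an infinite sequence in $S$ such that $\sum_{n\ge0}|s_n\cdots s_1J|^\tau<\infty$ (the $n=0$ term being $|J|^\tau$). If $c\in\mathrm{Homeo}_+(I)$ commutes with every element of $S$ and acts nontrivially on $J$ (i.e. $c(J)=J$ and $c|_J\neq\mathrm{id}$), then $S\cup\{c\}$ is a $(2,\tau)$-nesting. In particular, $S\cup\{c\}\not\subseteq\mathrm{Diff}_+^{1,\tau}(I)$.
   Context: $|\cdot|$ denotes length. $\mathrm{Diff}_+^{1,\tau}(I)$ is the group of orientation-preserving $C^1$-diffeomorphisms of $I$ with $\tau$-Hölder continuous derivative. For an integer $k\ge2$ and $u\in(0,1]$, a finite set $S\subseteq\mathrm{Homeo}_+(I)$ is a $(k,u)$-nesting if there exist nonempty open intervals $J_1\supsetneq\cdots\supsetneq J_k$ and an infinite sequence $(s_1,s_2,\ldots)$ in $S$ such that, with $w_n=s_n\cdots s_1$ ($w_0=\mathrm{id}$): (i) $\sum_{n\ge0}|w_nJ_1|^u<\infty$; (ii) for each $i=2,\ldots,k$ and $n\ge0$ some $s\in S$ satisfies $sw_nJ_i\cap w_nJ_i=\varnothing$ and $sw_nJ_{i-1}=w_nJ_{i-1}$. *)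

(* Defs.v *)
From Stdlib Require Import Reals List.
Open Scope R_scope.

Definition rset := R -> Prop.

Definition in_I (a b x : R) : Prop := a <= x <= b.

Definition oint (p q : R) : rset := fun x => p < x < q.

Definition img (f : R -> R) (A : rset) : rset := fun y => exists x, A x /\ f x = y.

Definition set_eq (A B : rset) : Prop := forall x, A x <-> B x.
Definition set_sub (A B : rset) : Prop := forall x, A x -> B x.
Definition set_disj (A B : rset) : Prop := forall x, ~ (A x /\ B x).

Definition cont_on (a b : R) (f : R -> R) : Prop :=
  forall x, in_I a b x -> forall eps, 0 < eps -> exists delta, 0 < delta /\
    forall y, in_I a b y -> Rabs (y - x) < delta -> Rabs (f y - f x) < eps.

Definition homeo_plus (a b : R) (f : R -> R) : Prop :=
  (forall x, in_I a b x -> in_I a b (f x)) /\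
  (exists g : R -> R,
      (forall y, in_I a b y -> in_I a b (g y)) /\
      (forall x, in_I a b x -> g (f x) = x) /\
      (forall y, in_I a b y -> f (g y) = y) /\
      cont_on a b f /\ cont_on a b g) /\
  (forall x y, in_I a b x -> in_I a b y -> x < y -> f x < f y).

(* f is in Diff_+^{1,tau}(I): an orientation-preserving homeomorphism of I,
   differentiable on I (one-sided at the endpoints) with derivative df that
   is positive (so that f is a C^1-diffeomorphism) and tau-Hoelder. *)
Definition diff1tau (a b tau : R) (f : R -> R) : Prop :=
  homeo_plus a b f /\
  exists df : R -> R,
    (forall x, in_I a b x -> forall eps, 0 < eps -> exists delta, 0 < delta /\
       forall y, in_I a b y -> y <> x -> Rabs (y - x) < delta ->
         Rabs ((f y - f x) / (y - x) - df x) < eps) /\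
    (forall x, in_I a b x -> 0 < df x) /\
    (exists C, forall x y, in_I a b x -> in_I a b y -> x <> y ->
       Rabs (df x - df y) <= C * Rpower (Rabs (x - y)) tau).

Fixpoint word (s : nat -> R -> R) (n : nat) : R -> R :=
  match n with
  | O => fun x => x
  | S m => fun x => s (S m) (word s m x)
  end.

Definition summable (u : nat -> R) : Prop := exists l, Un_cv (sum_f_R0 u) l.

(* The intervals J_1 ⊋ ... ⊋ J_k are J i = (fst (J i), snd (J i))
   for i = 1..k, nonempty open subintervals of I.  Since each w_n is an
   increasing homeomorphism of I, |w_n J_1| = w_n(q_1) - w_n(p_1). *)
Definition nesting (a b : R) (Sg : list (R -> R)) (k : nat) (u : R) : Prop :=
  exists (J : nat -> R * R) (s : nat -> R -> R),
    (forall i, (1 <= i <= k)%nat ->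
       a <= fst (J i) /\ fst (J i) < snd (J i) /\ snd (J i) <= b) /\
    (forall i, (1 <= i < k)%nat ->
       set_sub (oint (fst (J (S i))) (snd (J (S i)))) (oint (fst (J i)) (snd (J i))) /\
       ~ set_eq (oint (fst (J (S i))) (snd (J (S i)))) (oint (fst (J i)) (snd (J i)))) /\
    (forall n, (1 <= n)%nat -> In (s n) Sg) /\
    summable (fun n => Rpower (word s n (snd (J 1%nat)) - word s n (fst (J 1%nat))) u) /\
    (forall i n, (2 <= i <= k)%nat ->
       exists t, In t Sg /\
         set_disj (img t (img (word s n) (oint (fst (J i)) (snd (J i)))))
                  (img (word s n) (oint (fst (J i)) (snd (J i)))) /\
         set_eq (img t (img (word s n) (oint (fst (J (pred i))) (snd (J (pred i))))))
                (img (word s n) (oint (fst (J (pred i))) (snd (J (pred i)))))).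

(* Main.v *)
Require Import Defs.
From Stdlib Require Import Reals List Lra Lia.
Open Scope R_scope.

Definition clamp (a b x : R) := Rmax a (Rmin b x).

Lemma clamp_lip a b x y : a <= b -> Rabs (clamp a b x - clamp a b y) <= Rabs (x - y).
Proof. intros. unfold clamp, Rmax, Rmin; repeat destruct Rle_dec; unfold Rabs; repeat destruct Rcase_abs; lra. Qed.

Lemma clamp_in a b x : a <= b -> in_I a b (clamp a b x).
Proof. intros. unfold in_I, clamp, Rmax, Rmin; repeat destruct Rle_dec; lra. Qed.

Lemma clamp_id a b x : in_I a b x -> clamp a b x = x.
Proof. unfold in_I, clamp, Rmax, Rmin; intros; repeat destruct Rle_dec; lra. Qed.

Lemma Rpower_pos x y : 0 < Rpower x y.
Proof. unfold Rpower. apply exp_pos. Qed.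

Lemma df_lower (a b tau : R) (df : R -> R) (hab: a<b) (htau: 0<tau)
  (hpos: forall x, in_I a b x -> 0 < df x) (C : R)
  (hhol : forall x y, in_I a b x -> in_I a b y -> x <> y ->
     Rabs (df x - df y) <= C * Rpower (Rabs (x-y)) tau) :
  exists d, 0 < d /\ forall x, in_I a b x -> d <= df x.
Proof.
  set (h := fun z => df (clamp a b z)).
  assert (hc : forall z, continuity_pt h z).
  { intros z0. unfold continuity_pt, continue_in, limit1_in, limit_in. intros eps Heps.
    set (C' := Rabs C + 1).
    assert (HC' : 0 < C') by (unfold C'; pose proof (Rabs_pos C); lra).
    exists (Rpower (eps / C') (/ tau)). split. apply Rpower_pos.
    intros x [_ Hx]. simpl in *. unfold R_dist in *. unfold h.
    destruct (Req_dec (clamp a b x) (clamp a b z0)) as [E|E].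
    { rewrite E. replace (df (clamp a b z0) - df (clamp a b z0)) with 0 by ring. rewrite Rabs_R0. lra. }
    assert (H1 := hhol _ _ (clamp_in a b x (Rlt_le _ _ hab)) (clamp_in a b z0 (Rlt_le _ _ hab)) E).
    assert (H2 := clamp_lip a b x z0 (Rlt_le _ _ hab)).
    assert (H3 : 0 < Rabs (clamp a b x - clamp a b z0)) by (apply Rabs_pos_lt; lra).
    assert (H4 : Rpower (Rabs (clamp a b x - clamp a b z0)) tau < eps / C').
    { replace (eps / C') with (Rpower (Rpower (eps / C') (/ tau)) tau).
      apply Rlt_Rpower_l; lra.
      rewrite Rpower_mult. replace (/ tau * tau) with 1 by (field; lra).
      apply Rpower_1. apply Rdiv_lt_0_compat; lra. }
    assert (H5 : C * Rpower (Rabs (clamp a b x - clamp a b z0)) tau <=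
                 Rabs C * Rpower (Rabs (clamp a b x - clamp a b z0)) tau).
    { apply Rmult_le_compat_r. left; apply Rpower_pos. apply Rle_abs. }
    assert (H6 : Rabs C * Rpower (Rabs (clamp a b x - clamp a b z0)) tau <= Rabs C * (eps / C')).
    { apply Rmult_le_compat_l. apply Rabs_pos. lra. }
    assert (H7 : Rabs C * (eps / C') < eps).
    { assert (E1 : Rabs C * (eps / C') = eps - eps / C') by (unfold C'; field; pose proof (Rabs_pos C); lra).
      rewrite E1. assert (0 < eps / C') by (apply Rdiv_lt_0_compat; lra). lra. }
    lra. }
  destruct (continuity_ab_min h a b (Rlt_le _ _ hab) (fun c _ => hc c)) as [mx [Hmx Hin]].
  exists (h mx). split.
  - unfold h. apply hpos. apply clamp_in; lra.
  - intros x Hx. specialize (Hmx x Hx). unfold h in *. rewrite (clamp_id a b x Hx) in Hmx. exact Hmx.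
Qed.


Definition Q (f : R -> R) x y := (f y - f x) / (y - x).

Definition goodM a b tau f M := forall lo hi x y u v, a <= lo -> hi <= b ->
  lo < x < hi -> lo < y < hi -> lo < u < hi -> lo < v < hi -> x <> y -> u <> v ->
  Q f x y <= Q f u v * (1 + M * Rpower (hi - lo) tau).

Lemma Q_sym f x y : x <> y -> Q f x y = Q f y x.
Proof. intros. unfold Q. field. split; lra. Qed.

Lemma deriv_interior a b (f df : R -> R)
  (Hd : forall x, in_I a b x -> forall eps, 0 < eps -> exists delta, 0 < delta /\
       forall y, in_I a b y -> y <> x -> Rabs (y - x) < delta ->
         Rabs ((f y - f x) / (y - x) - df x) < eps) :
  forall c, a < c < b -> derivable_pt_lim f c (df c).
Proof.
  intros c Hc eps He.
  destruct (Hd c (conj (Rlt_le _ _ (proj1 Hc)) (Rlt_le _ _ (proj2 Hc))) eps He) as [del [Hdel H]].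
  assert (Hp : 0 < Rmin del (Rmin (c - a) (b - c))).
  { repeat apply Rmin_pos; lra. }
  exists (mkposreal _ Hp). intros h Hh0 Hh. simpl in Hh.
  assert (Hm1 := Rmin_l del (Rmin (c - a) (b - c))).
  assert (Hm2 := Rmin_r del (Rmin (c - a) (b - c))).
  assert (Hm3 := Rmin_l (c - a) (b - c)).
  assert (Hm4 := Rmin_r (c - a) (b - c)).
  assert (Ha := Rle_abs h). assert (Hb := Rle_abs (- h)). rewrite Rabs_Ropp in Hb.
  specialize (H (c + h)).
  replace (c + h - c) with h in H by ring.
  apply H. unfold in_I; lra. lra. lra.
Qed.

Lemma MVTQ a b (f df : R -> R)
  (Hd : forall c, a < c < b -> derivable_pt_lim f c (df c)) lo hi x y :
  a <= lo -> hi <= b -> lo < x < hi -> lo < y < hi -> x <> y ->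
  exists al, lo < al < hi /\ Q f x y = df al.
Proof.
  intros H1 H2 H3 H4 H5.
  assert (K : forall x y, lo < x < hi -> lo < y < hi -> x < y -> exists al, lo < al < hi /\ Q f x y = df al).
  { clear x y H3 H4 H5. intros x y H3 H4 H5.
    destruct (MVT_cor2 f df x y H5) as [al [E Hal]].
    { intros c Hc. apply Hd. lra. }
    exists al. split. lra. unfold Q. rewrite E. field. lra. }
  destruct (Rlt_or_le x y) as [L|L].
  - apply K; auto.
  - rewrite Q_sym by auto. apply K; auto. lra.
Qed.

Lemma good_of_diff a b tau f : a < b -> 0 < tau -> diff1tau a b tau f ->
  exists M0, 0 <= M0 /\ forall M, M0 <= M -> goodM a b tau f M.
Proof.
  intros hab htau [_ [df [Hd [Hp [C Hh]]]]].
  destruct (df_lower a b tau df hab htau Hp C Hh) as [d [Hd0 Hdl]].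
  assert (Hdi := deriv_interior a b f df Hd).
  exists (Rabs C / d). split. apply Rmult_le_pos. apply Rabs_pos. left; apply Rinv_0_lt_compat; lra.
  intros M HM lo hi x y u v H1 H2 H3 H4 H5 H6 H7 H8.
  destruct (MVTQ a b f df Hdi lo hi x y H1 H2 H3 H4 H7) as [al [Hal E1]].
  destruct (MVTQ a b f df Hdi lo hi u v H1 H2 H5 H6 H8) as [be [Hbe E2]].
  rewrite E1, E2.
  assert (Iab : in_I a b al) by (unfold in_I; lra).
  assert (Ibe : in_I a b be) by (unfold in_I; lra).
  assert (Db := Hdl be Ibe).
  assert (HM0 : 0 <= M) by (eapply Rle_trans; [|exact HM]; apply Rmult_le_pos; [apply Rabs_pos|left; apply Rinv_0_lt_compat; lra]).
  assert (Rp := Rpower_pos (hi - lo) tau).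
  assert (HMd : Rabs C <= df be * M).
  { apply Rle_trans with (d * (Rabs C / d)). right; field; lra.
    apply Rmult_le_compat; try lra. apply Rmult_le_pos. apply Rabs_pos. left; apply Rinv_0_lt_compat; lra. }
  destruct (Req_dec al be) as [Eq|Ne].
  - subst. assert (0 <= df be * (M * Rpower (hi - lo) tau)) by (apply Rmult_le_pos; [lra|apply Rmult_le_pos; lra]).
    lra.
  - assert (Hh1 := Hh al be Iab Ibe Ne).
    assert (Hh2 : C * Rpower (Rabs (al - be)) tau <= Rabs C * Rpower (hi - lo) tau).
    { apply Rle_trans with (Rabs C * Rpower (Rabs (al - be)) tau).
      apply Rmult_le_compat_r. left; apply Rpower_pos. apply Rle_abs.
      apply Rmult_le_compat_l. apply Rabs_pos. apply Rle_Rpower_l. lra. split.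
      apply Rabs_pos_lt. lra. unfold Rabs; destruct Rcase_abs; lra. }
    assert (Hh3 : Rabs C * Rpower (hi - lo) tau <= df be * M * Rpower (hi - lo) tau).
    { apply Rmult_le_compat_r; lra. }
    assert (Hh4 := Rle_abs (df al - df be)).
    nra.
Qed.

Lemma good_list a b tau (l : list (R -> R)) :
  (forall f, In f l -> exists M0, 0 <= M0 /\ forall M, M0 <= M -> goodM a b tau f M) ->
  exists M0, 0 <= M0 /\ forall f, In f l -> forall M, M0 <= M -> goodM a b tau f M.
Proof.
  induction l as [|g l IH]; intros H.
  - exists 0. split. lra. intros f [].
  - destruct IH as [M1 [HM1 H1]]. { intros f Hf. apply H. right; auto. }
    destruct (H g (or_introl eq_refl)) as [M2 [HM2 H2]].
    exists (Rmax M1 M2). split. eapply Rle_trans; [exact HM1| apply Rmax_l].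
    intros f [<-|Hf] M HM.
    + apply H2. eapply Rle_trans; [apply Rmax_r|exact HM].
    + apply H1; auto. eapply Rle_trans; [apply Rmax_l|exact HM].
Qed.


Definition maps a b (f : R -> R) := forall x, in_I a b x -> in_I a b (f x).
Definition incr a b (f : R -> R) := forall x y, in_I a b x -> in_I a b y -> x < y -> f x < f y.

Fixpoint psum (u : nat -> R) (n : nat) : R :=
  match n with O => 0 | S k => psum u k + u k end.

Lemma incr_inj a b f x y : incr a b f -> in_I a b x -> in_I a b y -> x <> y -> f x <> f y.
Proof. intros H Hx Hy Ne E. destruct (Rlt_or_le x y) as [L|L].
  - specialize (H x y Hx Hy L). lra.
  - assert (y < x) by lra. specialize (H y x Hy Hx H0). lra. Qed.

Lemma Q_pos a b f x y : incr a b f -> in_I a b x -> in_I a b y -> x <> y -> 0 < Q f x y.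
Proof. intros H Hx Hy Ne. unfold Q. destruct (Rlt_or_le x y) as [L|L].
  - specialize (H x y Hx Hy L). apply Rdiv_lt_0_compat; lra.
  - assert (y < x) by lra. specialize (H y x Hy Hx H0).
    replace ((f y - f x) / (y - x)) with ((f x - f y) / (x - y)) by (field; lra).
    apply Rdiv_lt_0_compat; lra. Qed.

Lemma Q_comp (g f : R -> R) x y : x <> y -> f x <> f y ->
  Q (fun z => g (f z)) x y = Q g (f x) (f y) * Q f x y.
Proof. intros. unfold Q. field. split; lra. Qed.

Lemma word_maps a b s : (forall n, (1 <= n)%nat -> maps a b (s n)) -> forall n, maps a b (word s n).
Proof. intros H n; induction n; intros x Hx; simpl; auto. apply H. lia. auto. Qed.

Lemma word_incr a b s : (forall n, (1 <= n)%nat -> maps a b (s n)) ->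
  (forall n, (1 <= n)%nat -> incr a b (s n)) -> forall n, incr a b (word s n).
Proof. intros Hm Hi n; induction n; intros x y Hx Hy L; simpl; auto.
  apply Hi. lia. apply word_maps; auto. apply word_maps; auto. auto. Qed.

Lemma iter_maps a b c : maps a b c -> forall m, maps a b (Nat.iter m c).
Proof. intros H m; induction m; intros x Hx; simpl; auto. Qed.

Lemma iter_incr a b c : maps a b c -> incr a b c -> forall m, incr a b (Nat.iter m c).
Proof. intros Hm Hi m; induction m; intros x y Hx Hy L; simpl; auto.
  apply Hi; auto; apply iter_maps; auto. Qed.

Lemma iter_succ_r (c : R -> R) m x : Nat.iter (S m) c x = Nat.iter m c (c x).
Proof. induction m; simpl; auto. simpl in IHm. rewrite IHm. auto. Qed.

Lemma word_comm a b s c : (forall n, (1 <= n)%nat -> maps a b (s n)) -> maps a b c ->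
  (forall n, (1 <= n)%nat -> forall x, in_I a b x -> c (s n x) = s n (c x)) ->
  forall n x, in_I a b x -> c (word s n x) = word s n (c x).
Proof. intros Hm Hc Hco n; induction n; intros x Hx; simpl; auto.
  rewrite Hco. rewrite IHn; auto. lia. apply word_maps; auto. Qed.

Lemma iter_word_comm a b s c : (forall n, (1 <= n)%nat -> maps a b (s n)) -> maps a b c ->
  (forall n, (1 <= n)%nat -> forall x, in_I a b x -> c (s n x) = s n (c x)) ->
  forall n m x, in_I a b x -> Nat.iter m c (word s n x) = word s n (Nat.iter m c x).
Proof. intros Hm Hc Hco n m; induction m; intros x Hx; simpl; auto.
  rewrite IHm; auto. apply (word_comm a b); auto. apply iter_maps; auto. Qed.

Lemma in_oint_word a b s p q : (forall n, (1 <= n)%nat -> maps a b (s n)) ->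
  (forall n, (1 <= n)%nat -> incr a b (s n)) -> a <= p -> q <= b ->
  forall n x, oint p q x -> word s n p < word s n x < word s n q.
Proof. intros Hm Hi Hp Hq n x [H1 H2].
  split; apply (word_incr a b s Hm Hi); unfold in_I; lra. Qed.

Lemma distortion a b tau s p q M : a <= p -> p < q -> q <= b -> 0 <= M ->
  (forall n, (1 <= n)%nat -> maps a b (s n)) ->
  (forall n, (1 <= n)%nat -> incr a b (s n)) ->
  (forall n, (1 <= n)%nat -> goodM a b tau (s n) M) ->
  forall n x y u v, oint p q x -> oint p q y -> oint p q u -> oint p q v -> x <> y -> u <> v ->
  Q (word s n) x y <= Q (word s n) u v *
     exp (M * psum (fun k => Rpower (word s k q - word s k p) tau) n).
Proof.
  intros Hp Hpq Hq HM Hm Hi Hg n. induction n; intros x y u v Hx Hy Hu Hv Nxy Nuv.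
  - simpl. rewrite Rmult_0_r, exp_0, Rmult_1_r. unfold Q; simpl. right.
    replace ((y - x) / (y - x)) with 1 by (field; lra). field; lra.
  - assert (Ix : in_I a b x) by (destruct Hx; unfold in_I; lra).
    assert (Iy : in_I a b y) by (destruct Hy; unfold in_I; lra).
    assert (Iu : in_I a b u) by (destruct Hu; unfold in_I; lra).
    assert (Iv : in_I a b v) by (destruct Hv; unfold in_I; lra).
    assert (Wi := word_incr a b s Hm Hi n).
    assert (Wm := word_maps a b s Hm n).
    assert (Nwxy := incr_inj a b _ x y Wi Ix Iy Nxy).
    assert (Nwuv := incr_inj a b _ u v Wi Iu Iv Nuv).
    change (Q (fun z => s (S n) (word s n z)) x y <= Q (fun z => s (S n) (word s n z)) u v *
      exp (M * (psum (fun k => Rpower (word s k q - word s k p) tau) n + Rpower (word s n q - word s n p) tau))).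
    rewrite (Q_comp (s (S n)) (word s n) x y) by auto.
    rewrite (Q_comp (s (S n)) (word s n) u v) by auto.
    assert (Ip : in_I a b p) by (unfold in_I; lra).
    assert (Iq : in_I a b q) by (unfold in_I; lra).
    assert (Hwp := Wm p Ip). assert (Hwq := Wm q Iq). unfold in_I in Hwp, Hwq.
    assert (G := Hg (S n) ltac:(lia) (word s n p) (word s n q) (word s n x) (word s n y)
       (word s n u) (word s n v) ltac:(lra) ltac:(lra)
       (in_oint_word a b s p q Hm Hi Hp Hq n x Hx) (in_oint_word a b s p q Hm Hi Hp Hq n y Hy)
       (in_oint_word a b s p q Hm Hi Hp Hq n u Hu) (in_oint_word a b s p q Hm Hi Hp Hq n v Hv) Nwxy Nwuv).
    assert (IH := IHn x y u v Hx Hy Hu Hv Nxy Nuv).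
    set (P := psum (fun k => Rpower (word s k q - word s k p) tau) n) in *.
    set (t := Rpower (word s n q - word s n p) tau) in *.
    assert (Et : 1 + M * t <= exp (M * t)) by apply exp_ineq1_le.
    rewrite Rmult_plus_distr_l, exp_plus.
    assert (Hs1 : 0 < Q (s (S n)) (word s n x) (word s n y)).
    { apply (Q_pos a b); auto. apply Hi; lia. }
    assert (Hs2 : 0 < Q (s (S n)) (word s n u) (word s n v)).
    { apply (Q_pos a b); auto. apply Hi; lia. }
    assert (Hw1 : 0 < Q (word s n) x y) by (apply (Q_pos a b); auto).
    assert (Hw2 : 0 < Q (word s n) u v) by (apply (Q_pos a b); auto).
    assert (Hw3 : 0 < 1 + M * t) by (unfold t; assert (0 < Rpower (word s n q - word s n p) tau) by apply Rpower_pos; nra).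
    assert (E1 := exp_pos (M * P)).
    apply Rle_trans with ((Q (s (S n)) (word s n u) (word s n v) * (1 + M * t)) *
                          (Q (word s n) u v * exp (M * P))).
    apply Rmult_le_compat; lra.
    assert (0 < Q (s (S n)) (word s n u) (word s n v) * Q (word s n) u v * exp (M * P)) by
      (apply Rmult_lt_0_compat; [apply Rmult_lt_0_compat|]; lra).
    replace (Q (s (S n)) (word s n u) (word s n v) * (1 + M * t) * (Q (word s n) u v * exp (M * P)))
      with ((Q (s (S n)) (word s n u) (word s n v) * Q (word s n) u v * exp (M * P)) * (1 + M * t)) by ring.
    replace (Q (s (S n)) (word s n u) (word s n v) * Q (word s n) u v * (exp (M * P) * exp (M * t)))
      with ((Q (s (S n)) (word s n u) (word s n v) * Q (word s n) u v * exp (M * P)) * exp (M * t)) by ring.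
    apply Rmult_le_compat_l; lra.
Qed.


Lemma citer a b tau s p q M c : a <= p -> p < q -> q <= b -> 0 <= M ->
  (forall n, (1 <= n)%nat -> maps a b (s n)) ->
  (forall n, (1 <= n)%nat -> incr a b (s n)) ->
  maps a b c -> incr a b c -> goodM a b tau c M ->
  (forall n, (1 <= n)%nat -> forall x, in_I a b x -> c (s n x) = s n (c x)) ->
  (forall x, oint p q x -> oint p q (c x)) ->
  forall n m x y u v, oint p q x -> oint p q y -> oint p q u -> oint p q v -> x <> y -> u <> v ->
  Q (Nat.iter m c) (word s n x) (word s n y) <= Q (Nat.iter m c) (word s n u) (word s n v) *
     (1 + M * Rpower (word s n q - word s n p) tau) ^ m.
Proof.
  intros Hp Hpq Hq HM Hm Hi Hcm Hci Hcg Hco Hcj n m.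
  assert (Ip : in_I a b p) by (unfold in_I; lra).
  assert (Iq : in_I a b q) by (unfold in_I; lra).
  assert (Wi := word_incr a b s Hm Hi n).
  assert (Wm := word_maps a b s Hm n).
  assert (Hwp := Wm p Ip). assert (Hwq := Wm q Iq). unfold in_I in Hwp, Hwq.
  assert (Iw : forall x, oint p q x -> in_I a b (word s n x)).
  { intros x Hx. apply Wm. destruct Hx; unfold in_I; lra. }
  assert (Io : forall x, oint p q x -> in_I a b x).
  { intros x Hx. destruct Hx; unfold in_I; lra. }
  assert (Hjm : forall m x, oint p q x -> oint p q (Nat.iter m c x)).
  { intro k; induction k; intros x Hx; simpl; auto. }
  induction m; intros x y u v Hx Hy Hu Hv Nxy Nuv.
  - unfold Q; simpl. rewrite Rmult_1_r.
    assert (word s n x <> word s n y) by (apply (incr_inj a b); auto).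
    assert (word s n u <> word s n v) by (apply (incr_inj a b); auto).
    right. field. split; lra.
  - assert (Nw1 : word s n x <> word s n y) by (apply (incr_inj a b); auto).
    assert (Nw2 : word s n u <> word s n v) by (apply (incr_inj a b); auto).
    assert (Ii := iter_incr a b c Hcm Hci m).
    assert (N1 : Nat.iter m c (word s n x) <> Nat.iter m c (word s n y)) by (apply (incr_inj a b); auto).
    assert (N2 : Nat.iter m c (word s n u) <> Nat.iter m c (word s n v)) by (apply (incr_inj a b); auto).
    change (Q (fun z => c (Nat.iter m c z)) (word s n x) (word s n y) <=
            Q (fun z => c (Nat.iter m c z)) (word s n u) (word s n v) *
            ((1 + M * Rpower (word s n q - word s n p) tau) * (1 + M * Rpower (word s n q - word s n p) tau) ^ m)).
    rewrite (Q_comp c (Nat.iter m c) (word s n x)) by auto.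
    rewrite (Q_comp c (Nat.iter m c) (word s n u)) by auto.
    assert (IH := IHm x y u v Hx Hy Hu Hv Nxy Nuv).
    assert (Hs1 : 0 < Q c (Nat.iter m c (word s n x)) (Nat.iter m c (word s n y))).
    { apply (Q_pos a b); auto; apply iter_maps; auto. }
    assert (Hs2 : 0 < Q c (Nat.iter m c (word s n u)) (Nat.iter m c (word s n v))).
    { apply (Q_pos a b); auto; apply iter_maps; auto. }
    assert (Hw1 : 0 < Q (Nat.iter m c) (word s n x) (word s n y)) by (apply (Q_pos a b); auto).
    assert (Hw2 : 0 < Q (Nat.iter m c) (word s n u) (word s n v)) by (apply (Q_pos a b); auto).
    rewrite !(iter_word_comm a b s c Hm Hcm Hco n m x) in Hs1, N1 |- * by auto.
    rewrite !(iter_word_comm a b s c Hm Hcm Hco n m y) in Hs1, N1 |- * by auto.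
    rewrite !(iter_word_comm a b s c Hm Hcm Hco n m u) in Hs2, N2 |- * by auto.
    rewrite !(iter_word_comm a b s c Hm Hcm Hco n m v) in Hs2, N2 |- * by auto.
    assert (G := Hcg (word s n p) (word s n q) (word s n (Nat.iter m c x)) (word s n (Nat.iter m c y))
       (word s n (Nat.iter m c u)) (word s n (Nat.iter m c v)) ltac:(lra) ltac:(lra)
       (in_oint_word a b s p q Hm Hi Hp Hq n _ (Hjm m x Hx)) (in_oint_word a b s p q Hm Hi Hp Hq n _ (Hjm m y Hy))
       (in_oint_word a b s p q Hm Hi Hp Hq n _ (Hjm m u Hu)) (in_oint_word a b s p q Hm Hi Hp Hq n _ (Hjm m v Hv)) N1 N2).
    set (t := 1 + M * Rpower (word s n q - word s n p) tau) in *.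
    assert (Ht : 0 < t) by (unfold t; assert (0 < Rpower (word s n q - word s n p) tau) by apply Rpower_pos; nra).
    assert (Htm : 0 < t ^ m) by (apply pow_lt; auto).
    apply Rle_trans with ((Q c (word s n (Nat.iter m c u)) (word s n (Nat.iter m c v)) * t) *
       (Q (Nat.iter m c) (word s n u) (word s n v) * t ^ m)).
    apply Rmult_le_compat; lra.
    right; ring.
Qed.

Lemma alg d al ga r1 r2 r3 L K : 0 < r1 -> 0 < r2 -> 0 < r3 -> 0 < L -> 0 <= K ->
  d <> 0 -> al <> 0 -> ga <> 0 ->
  0 < (r1 * d) / (r3 * ga) -> 0 < (r2 * al) / (r1 * d) ->
  (r1 * d) / (r3 * ga) <= (r2 * al) / (r1 * d) * L -> r2 <= r1 * K -> r3 <= r1 * K ->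
  d * d <= K * K * L * (al * ga) /\ 0 < d * al /\ 0 < d * ga.
Proof.
  intros H1 H2 H3 HL HK Hd Ha Hg X Y Z W1 W2.
  set (x := (r1 * d) / (r3 * ga)) in *. set (y := (r2 * al) / (r1 * d)) in *.
  assert (Ex : r1 * d = x * (r3 * ga)) by (unfold x; field; split; lra).
  assert (Ey : r2 * al = y * (r1 * d)) by (unfold y; field; split; lra).
  assert (Dg : 0 < d * ga).
  { assert (r1 * (d * ga) = x * r3 * (ga * ga)) by (rewrite <- Rmult_assoc, Ex; ring).
    assert (0 < ga * ga) by (apply Rsqr_pos_lt; auto).
    assert (0 < x * r3 * (ga * ga)) by (apply Rmult_lt_0_compat; [apply Rmult_lt_0_compat|]; lra).
    nra. }
  assert (Da : 0 < d * al).
  { assert (r2 * (d * al) = y * r1 * (d * d)) by (replace (r2 * (d * al)) with ((r2 * al) * d) by ring; rewrite Ey; ring).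
    assert (0 < d * d) by (apply Rsqr_pos_lt; auto).
    assert (0 < y * r1 * (d * d)) by (apply Rmult_lt_0_compat; [apply Rmult_lt_0_compat|]; lra).
    nra. }
  split; [|split; auto].
  assert (P : 0 < r1 * d * (r3 * ga)) by (replace (r1 * d * (r3 * ga)) with (r1 * r3 * (d * ga)) by ring;
     apply Rmult_lt_0_compat; [apply Rmult_lt_0_compat|]; lra).
  assert (S1 : x * (r1 * d * (r3 * ga)) <= y * L * (r1 * d * (r3 * ga))) by (apply Rmult_le_compat_r; lra).
  assert (E1 : x * (r1 * d * (r3 * ga)) = (r1 * d) * (r1 * d)) by (rewrite Ex; ring).
  assert (E2 : y * L * (r1 * d * (r3 * ga)) = r2 * r3 * L * (al * ga)) by
    (replace (y * L * (r1 * d * (r3 * ga))) with ((y * (r1 * d)) * r3 * L * ga) by ring; rewrite <- Ey; ring).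
  assert (AG : 0 < al * ga).
  { assert ((d * al) * (d * ga) = (d * d) * (al * ga)) by ring.
    assert (0 < (d * al) * (d * ga)) by (apply Rmult_lt_0_compat; auto).
    assert (0 < d * d) by (apply Rsqr_pos_lt; auto). nra. }
  assert (R23 : r2 * r3 <= (r1 * K) * (r1 * K)) by (apply Rmult_le_compat; lra).
  assert (S2 : r2 * r3 * L * (al * ga) <= (r1 * K) * (r1 * K) * L * (al * ga)).
  { apply Rmult_le_compat_r. lra. apply Rmult_le_compat_r; lra. }
  assert (S3 : (r1 * r1) * (d * d) <= (r1 * r1) * (K * K * L * (al * ga))) by
     (replace ((r1 * r1) * (d * d)) with ((r1 * d) * (r1 * d)) by ring;
      replace ((r1 * r1) * (K * K * L * (al * ga))) with ((r1 * K) * (r1 * K) * L * (al * ga)) by ring; lra).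
  apply Rmult_le_reg_l with (r1 * r1). nra. exact S3.
Qed.


Lemma exp_le x y : x <= y -> exp x <= exp y.
Proof. intros [H|H]. left; apply exp_increasing; auto. subst; lra. Qed.

Lemma pow_exp_le x m : 0 <= x -> (1 + x) ^ m <= exp (x * INR m).
Proof. intros Hx. induction m.
  - simpl. rewrite Rmult_0_r, exp_0. lra.
  - rewrite S_INR. replace (x * (INR m + 1)) with (x + x * INR m) by ring. rewrite exp_plus.
    simpl. apply Rmult_le_compat; try lra. apply pow_le; lra. apply exp_ineq1_le. Qed.

Lemma psum_sum u n : psum u (S n) = sum_f_R0 u n.
Proof. induction n. simpl. ring. change (psum u (S n) + u (S n) = sum_f_R0 u n + u (S n)). rewrite IHn. auto. Qed.

Lemma psum_le u l : (forall n, 0 < u n) -> Un_cv (sum_f_R0 u) l -> forall n, psum u n <= l.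
Proof. intros Hu Hl n.
  assert (G : Un_growing (sum_f_R0 u)). { intro k. simpl. specialize (Hu (S k)). lra. }
  apply Rle_trans with (psum u (S n)). simpl. specialize (Hu n). lra.
  rewrite psum_sum. apply growing_ineq; auto. Qed.

Lemma term_small u l : Un_cv (sum_f_R0 u) l -> forall eps, 0 < eps -> exists n, u n < eps.
Proof. intros Hl eps He. destruct (Hl (eps / 2)) as [N HN]. lra.
  exists (S N). assert (H1 := HN N (le_n N)). assert (H2 := HN (S N) (le_S _ _ (le_n N))).
  unfold R_dist in *. change (sum_f_R0 u (S N)) with (sum_f_R0 u N + u (S N)) in H2.
  unfold Rabs in *. destruct Rcase_abs; destruct Rcase_abs; lra. Qed.

Lemma iter_inv (c g : R -> R) a b p q : (forall y, in_I a b y -> c (g y) = y) ->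
  (forall y, oint p q y -> oint p q (g y)) -> a <= p -> q <= b ->
  forall m y, oint p q y -> Nat.iter m c (Nat.iter m g y) = y.
Proof. intros Hcg Hgj Hp Hq m; induction m; intros y Hy. reflexivity.
  rewrite iter_succ_r. simpl. rewrite Hcg. apply IHm; auto.
  assert (oint p q (Nat.iter m g y)). { clear IHm. induction m; simpl; auto. }
  destruct H; unfold in_I; lra. Qed.

Lemma part2 (a b : R) (hab : a < b)
  (S : list (R -> R)) (hS : forall f, In f S -> homeo_plus a b f)
  (tau : R) (htau : 0 < tau < 1)
  (p q : R) (hpq : a <= p /\ p < q /\ q <= b)
  (s : nat -> R -> R) (hs : forall n, (1 <= n)%nat -> In (s n) S)
  (hsum : summable (fun n => Rpower (word s n q - word s n p) tau))
  (c : R -> R) (hc : homeo_plus a b c)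
  (hcomm : forall f, In f S -> forall x, in_I a b x -> c (f x) = f (c x))
  (hcJ : set_eq (img c (oint p q)) (oint p q))
  (hcnt : exists x, oint p q x /\ c x <> x) :
  ~ (forall f, In f (c :: S) -> diff1tau a b tau f).
Proof.
  intros Hall. destruct htau as [ht0 ht1]. destruct hpq as [Hp [Hpq Hq]].
  destruct (good_list a b tau (c :: S)) as [M [HM HG]].
  { intros f Hf. apply good_of_diff; auto. }
  assert (Hgc : goodM a b tau c M) by (apply HG; [left; auto | lra]).
  assert (Hgs : forall n, (1 <= n)%nat -> goodM a b tau (s n) M) by (intros; apply HG; [right; auto | lra]).
  assert (Hm : forall n, (1 <= n)%nat -> maps a b (s n)) by (intros n Hn; exact (proj1 (hS _ (hs n Hn)))).
  assert (Hi : forall n, (1 <= n)%nat -> incr a b (s n)) by (intros n Hn; exact (proj2 (proj2 (hS _ (hs n Hn))))).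
  destruct hc as [Hcm [[g [Hgm [Hgc1 [Hcg1 _]]]] Hci]].
  assert (Hco : forall n, (1 <= n)%nat -> forall x, in_I a b x -> c (s n x) = s n (c x))
    by (intros n Hn; apply hcomm; auto).
  assert (Io : forall x, oint p q x -> in_I a b x) by (intros x [H1 H2]; unfold in_I; lra).
  assert (Hcj : forall x, oint p q x -> oint p q (c x)).
  { intros x Hx. apply (proj1 (hcJ (c x))). exists x; auto. }
  assert (Hgj : forall y, oint p q y -> oint p q (g y)).
  { intros y Hy. destruct (proj2 (hcJ y) Hy) as [x [Hx E]]. subst y. rewrite Hgc1; auto. }
  assert (Hjm : forall m x, oint p q x -> oint p q (Nat.iter m c x)).
  { intro k; induction k; intros x Hx; simpl; auto. }
  assert (Hjg : forall m x, oint p q x -> oint p q (Nat.iter m g x)).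
  { intro k; induction k; intros x Hx; simpl; auto. }
  destruct hcnt as [x0 [Hx0 Hcx0]].
  destruct hsum as [l Hl].
  set (u := fun n => Rpower (word s n q - word s n p) tau) in *.
  assert (Hu : forall n, 0 < u n) by (intro; apply Rpower_pos).
  assert (Hps := psum_le u l Hu Hl).
  set (d := c x0 - x0).
  assert (Hd : d <> 0) by (unfold d; lra).
  set (K0 := exp (M * l)).
  assert (Key : forall m, 0 < d * (Nat.iter m c (c x0) - Nat.iter m c x0) /\
                          0 < d * (c (Nat.iter m g x0) - Nat.iter m g x0) /\
    d * d <= K0 * K0 * 3 * ((Nat.iter m c (c x0) - Nat.iter m c x0) * (c (Nat.iter m g x0) - Nat.iter m g x0))).
  { intro m.
    set (bm := Nat.iter m g x0).
    assert (Hb : oint p q bm) by (apply Hjg; auto).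
    assert (Hcb : oint p q (c bm)) by auto.
    assert (Hinv : Nat.iter m c bm = x0) by (apply (iter_inv c g a b p q); auto).
    assert (Hinv2 : Nat.iter m c (c bm) = c x0) by (rewrite <- iter_succ_r; simpl; rewrite Hinv; auto).
    assert (Hcx0' : oint p q (c x0)) by auto.
    assert (Ham : oint p q (Nat.iter m c x0)) by auto.
    assert (Ham' : oint p q (Nat.iter m c (c x0))) by auto.
    assert (Nb : bm <> c bm).
    { intro E. apply Hcx0. rewrite <- Hinv2, <- E. exact Hinv. }
    assert (Nx : x0 <> c x0) by (intro E; apply Hcx0; auto).
    assert (Ii := iter_incr a b c Hcm Hci m).
    assert (Na : Nat.iter m c x0 <> Nat.iter m c (c x0)) by (apply (incr_inj a b (Nat.iter m c)); auto).
    set (y := M * INR m).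
    assert (Hy : 0 <= y) by (unfold y; apply Rmult_le_pos; auto; apply pos_INR).
    destruct (term_small u l Hl (/ (y + 1))) as [n Hn].
    { apply Rinv_0_lt_compat; lra. }
    set (L := (1 + M * u n) ^ m).
    assert (HL0 : 0 < L) by (unfold L; apply pow_lt; assert (0 < u n) by auto; nra).
    assert (HL3 : L <= 3).
    { apply Rle_trans with (exp (M * u n * INR m)). apply pow_exp_le. assert (0 < u n) by auto; nra.
      apply Rle_trans with (exp 1); [|exact exp_le_3]. apply exp_le.
      assert (Y1 : y * / (y + 1) < 1).
      { apply (Rmult_lt_reg_r (y + 1)). lra. rewrite Rmult_assoc, Rinv_l by lra. lra. }
      assert (Y2 : y * u n <= y * / (y + 1)) by (apply Rmult_le_compat_l; lra).
      replace (M * u n * INR m) with (y * u n) by (unfold y; ring). lra. }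
    assert (CI := citer a b tau s p q M c Hp Hpq Hq HM Hm Hi Hcm Hci Hgc Hco Hcj n m bm (c bm) x0 (c x0)
                   Hb Hcb Hx0 Hcx0' Nb Nx).
    change (Rpower (word s n q - word s n p) tau) with (u n) in CI. fold L in CI.
    assert (Wi := word_incr a b s Hm Hi n).
    assert (Wm := word_maps a b s Hm n).
    assert (P1 : 0 < Q (Nat.iter m c) (word s n bm) (word s n (c bm))).
    { apply (Q_pos a b); auto. apply (incr_inj a b); auto. }
    assert (P2 : 0 < Q (Nat.iter m c) (word s n x0) (word s n (c x0))).
    { apply (Q_pos a b); auto. apply (incr_inj a b); auto. }
    unfold Q in CI, P1, P2.
    rewrite !(iter_word_comm a b s c Hm Hcm Hco n m bm), !(iter_word_comm a b s c Hm Hcm Hco n m (c bm)) in CI, P1 by auto.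
    rewrite !(iter_word_comm a b s c Hm Hcm Hco n m x0), !(iter_word_comm a b s c Hm Hcm Hco n m (c x0)) in CI, P2 by auto.
    rewrite Hinv, Hinv2 in CI, P1.
    assert (DI1 := distortion a b tau s p q M Hp Hpq Hq HM Hm Hi Hgs n _ _ x0 (c x0) Ham Ham' Hx0 Hcx0' Na Nx).
    assert (DI2 := distortion a b tau s p q M Hp Hpq Hq HM Hm Hi Hgs n _ _ x0 (c x0) Hb Hcb Hx0 Hcx0' Nb Nx).
    change (psum (fun k => Rpower (word s k q - word s k p) tau) n) with (psum u n) in DI1, DI2.
    set (K := exp (M * psum u n)) in *.
    set (r1 := Q (word s n) x0 (c x0)) in *.
    set (r2 := Q (word s n) (Nat.iter m c x0) (Nat.iter m c (c x0))) in *.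
    set (r3 := Q (word s n) bm (c bm)) in *.
    assert (R1 : 0 < r1) by (apply (Q_pos a b); auto).
    assert (R2 : 0 < r2) by (apply (Q_pos a b); auto).
    assert (R3 : 0 < r3) by (apply (Q_pos a b); auto).
    set (al := Nat.iter m c (c x0) - Nat.iter m c x0).
    set (ga := c bm - bm).
    assert (E1 : word s n (c x0) - word s n x0 = r1 * d) by (unfold r1, Q, d; field; lra).
    assert (E2 : word s n (Nat.iter m c (c x0)) - word s n (Nat.iter m c x0) = r2 * al) by (unfold r2, Q, al; field; lra).
    assert (E3 : word s n (c bm) - word s n bm = r3 * ga) by (unfold r3, Q, ga; field; lra).
    rewrite E1, E2, E3 in CI. rewrite E1, E3 in P1. rewrite E1, E2 in P2.
    assert (HK : 0 <= K) by (left; apply exp_pos).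
    assert (Nal : al <> 0) by (unfold al; lra).
    assert (Nga : ga <> 0) by (unfold ga; lra).
    destruct (alg d al ga r1 r2 r3 L K R1 R2 R3 HL0 HK Hd Nal Nga P1 P2 CI DI1 DI2) as [A1 [A2 A3]].
    split; auto. split; auto.
    assert (KK : K <= K0) by (apply exp_le; apply Rmult_le_compat_l; auto).
    assert (AG : 0 < al * ga).
    { assert ((d * al) * (d * ga) = (d * d) * (al * ga)) by ring.
      assert (0 < (d * al) * (d * ga)) by (apply Rmult_lt_0_compat; auto).
      assert (0 < d * d) by (apply Rsqr_pos_lt; auto). nra. }
    assert (T1 : K * K <= K0 * K0) by (apply Rmult_le_compat; lra).
    assert (T2 : K * K * L <= K0 * K0 * 3) by (apply Rmult_le_compat; try lra; apply Rmult_le_pos; lra).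
    assert (T3 : K * K * L * (al * ga) <= K0 * K0 * 3 * (al * ga)) by (apply Rmult_le_compat_r; lra).
    lra. }
  assert (HK0 : 0 < K0) by apply exp_pos.
  assert (Had : 0 < Rabs d) by (apply Rabs_pos_lt; auto).
  set (B := Rabs d * (q - p)).
  assert (HB : 0 < B) by (unfold B; apply Rmult_lt_0_compat; lra).
  assert (Hdd : 0 < d * d) by (apply Rsqr_pos_lt; auto).
  set (eta := (d * d) * (d * d) / (K0 * K0 * 3)).
  assert (Heta : 0 < eta) by (unfold eta; apply Rdiv_lt_0_compat; [apply Rmult_lt_0_compat|]; nra).
  set (kap := eta / B).
  assert (Hkap : 0 < kap) by (unfold kap; apply Rdiv_lt_0_compat; lra).
  assert (Hab_bound : forall x y, oint p q x -> oint p q y -> d * (x - y) < B).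
  { intros x y [H1 H2] [H3 H4]. unfold B.
    apply Rle_lt_trans with (Rabs (d * (x - y))). apply Rle_abs. rewrite Rabs_mult.
    apply Rmult_lt_compat_l; auto. unfold Rabs; destruct Rcase_abs; lra. }
  assert (Hg : forall m, kap <= d * (c (Nat.iter m g x0) - Nat.iter m g x0)).
  { intro m. destruct (Key m) as [HA [HG2 HI]].
    set (al := Nat.iter m c (c x0) - Nat.iter m c x0) in *.
    set (ga := c (Nat.iter m g x0) - Nat.iter m g x0) in *.
    assert (HAB : d * al < B) by (unfold al; apply Hab_bound; auto).
    assert (E : (d * al) * (d * ga) = (d * d) * (al * ga)) by ring.
    assert (H1 : (d * d) * (d * d) <= (d * d) * (K0 * K0 * 3 * (al * ga))) by (apply Rmult_le_compat_l; lra).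
    assert (H2 : eta <= (d * al) * (d * ga)).
    { unfold eta. rewrite E. apply (Rmult_le_reg_r (K0 * K0 * 3)). nra.
      unfold Rdiv. rewrite Rmult_assoc, Rinv_l by nra. nra. }
    unfold kap. apply (Rmult_le_reg_r B). lra. unfold Rdiv. rewrite Rmult_assoc, Rinv_l by lra.
    rewrite Rmult_1_r. nra. }
  assert (Tel : forall N, INR N * kap <= d * (x0 - Nat.iter N g x0)).
  { induction N. simpl. lra.
    rewrite S_INR. specialize (Hg (Datatypes.S N)). simpl in Hg |- *.
    rewrite Hcg1 in Hg by (apply Io; apply Hjg; auto). nra. }
  destruct (INR_archimed kap B Hkap) as [N HN].
  assert (T1 := Tel N). assert (T2 : d * (x0 - Nat.iter N g x0) < B) by (apply Hab_bound; auto).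
  lra.
Qed.


Lemma part1 (a b : R) (hab : a < b)
  (S : list (R -> R)) (hS : forall f, In f S -> homeo_plus a b f)
  (tau : R) (htau : 0 < tau < 1)
  (p q : R) (hpq : a <= p /\ p < q /\ q <= b)
  (s : nat -> R -> R) (hs : forall n, (1 <= n)%nat -> In (s n) S)
  (hsum : summable (fun n => Rpower (word s n q - word s n p) tau))
  (c : R -> R) (hc : homeo_plus a b c)
  (hcomm : forall f, In f S -> forall x, in_I a b x -> c (f x) = f (c x))
  (hcJ : set_eq (img c (oint p q)) (oint p q))
  (hcnt : exists x, oint p q x /\ c x <> x) :
  nesting a b (c :: S) 2 tau.
Proof.
  destruct hpq as [Hp [Hpq Hq]].
  destruct hcnt as [x0 [[Hx1 Hx2] Hcx0]].
  assert (Hm : forall n, (1 <= n)%nat -> maps a b (s n)) by (intros n Hn; exact (proj1 (hS _ (hs n Hn)))).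
  assert (Hi : forall n, (1 <= n)%nat -> incr a b (s n)) by (intros n Hn; exact (proj2 (proj2 (hS _ (hs n Hn))))).
  destruct hc as [Hcm [[g [_ [_ [_ [Hcont _]]]]] Hci]].
  assert (Hco : forall n, (1 <= n)%nat -> forall x, in_I a b x -> c (s n x) = s n (c x))
    by (intros n Hn; apply hcomm; auto).
  assert (Io : forall x, oint p q x -> in_I a b x) by (intros x [H1 H2]; unfold in_I; lra).
  assert (Hcj : forall x, oint p q x -> oint p q (c x)).
  { intros x Hx. apply (proj1 (hcJ (c x))). exists x; auto. }
  set (e := Rabs (c x0 - x0)).
  assert (He : 0 < e) by (apply Rabs_pos_lt; lra).
  destruct (Hcont x0 ltac:(unfold in_I; lra) (e / 3) ltac:(lra)) as [del [Hdel Hcd]].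
  set (r := Rmin (Rmin del (e / 3)) (Rmin (x0 - p) (q - x0)) / 2).
  assert (Hr0 : 0 < r) by (unfold r; apply Rdiv_lt_0_compat; [repeat apply Rmin_pos; lra | lra]).
  assert (Hr1 : r < del) by (unfold r; pose proof (Rmin_l (Rmin del (e / 3)) (Rmin (x0 - p) (q - x0)));
     pose proof (Rmin_l del (e/3)); lra).
  assert (Hr2 : r < e / 3) by (unfold r; pose proof (Rmin_l (Rmin del (e / 3)) (Rmin (x0 - p) (q - x0)));
     pose proof (Rmin_r del (e/3)); lra).
  assert (Hr3 : r <= (x0 - p) / 2) by (unfold r; pose proof (Rmin_r (Rmin del (e / 3)) (Rmin (x0 - p) (q - x0)));
     pose proof (Rmin_l (x0 - p) (q - x0)); lra).
  assert (Hr4 : r <= (q - x0) / 2) by (unfold r; pose proof (Rmin_r (Rmin del (e / 3)) (Rmin (x0 - p) (q - x0)));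
     pose proof (Rmin_r (x0 - p) (q - x0)); lra).
  exists (fun i => match i with 1%nat => (p, q) | _ => (x0 - r, x0 + r) end), s.
  split; [|split; [|split; [|split]]].
  - intros i Hi2. destruct i as [|[|[|i]]]; try lia; simpl; lra.
  - intros i Hi2. destruct i as [|[|i]]; try lia. simpl. split.
    + intros z [H1 H2]. split; lra.
    + intro E. destruct (E ((p + (x0 - r)) / 2)) as [_ H]. assert (oint p q ((p + (x0 - r)) / 2)) by (split; lra).
      destruct (H H0). lra.
  - intros n Hn. right. auto.
  - exact hsum.
  - intros i n Hi2. assert (i = 2%nat) by lia. subst i. simpl.
    assert (Wi := word_incr a b s Hm Hi n).
    assert (Wm := word_maps a b s Hm n).
    assert (Wc := word_comm a b s c Hm Hcm Hco n).
    exists c. split. left; auto. split.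
    + intros y [[z [[z1 [Hz1 Ez1]] Ez]] [z' [Hz' Ez']]].
      destruct Hz1 as [Hz1a Hz1b]. destruct Hz' as [Hz'a Hz'b].
      assert (Iz1 : in_I a b z1) by (unfold in_I; lra).
      assert (Iz' : in_I a b z') by (unfold in_I; lra).
      subst z y. rewrite Wc in Ez' by auto.
      assert (Ecz : c z1 = z').
      { destruct (Req_dec (c z1) z') as [E|E]; auto. exfalso.
        apply (incr_inj a b (word s n) (c z1) z' Wi); auto. }
      assert (A1 := Hcd z1 Iz1 ltac:(unfold Rabs; destruct Rcase_abs; lra)).
      unfold e in *. rewrite Ecz in A1. revert A1 Hr2.
      unfold Rabs; repeat destruct Rcase_abs; lra.
    + intros y; split.
      * intros [z [[z1 [Hz1 E1]] E]]. subst z y. rewrite Wc by auto. exists (c z1). split; auto.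
      * intros [z [Hz E]]. destruct (proj2 (hcJ z) Hz) as [z' [Hz' Ez']].
        exists (word s n z'). split. exists z'. split; auto.
        rewrite Wc by auto. rewrite Ez'. auto.
Qed.


Theorem lemma3p7 (a b : R) (hab : a < b)
  (S : list (R -> R)) (hS : forall f, In f S -> homeo_plus a b f)
  (tau : R) (htau : 0 < tau < 1)
  (p q : R) (hpq : a <= p /\ p < q /\ q <= b)
  (s : nat -> R -> R) (hs : forall n, (1 <= n)%nat -> In (s n) S)
  (hsum : summable (fun n => Rpower (word s n q - word s n p) tau))
  (c : R -> R) (hc : homeo_plus a b c)
  (hcomm : forall f, In f S -> forall x, in_I a b x -> c (f x) = f (c x))
  (hcJ : set_eq (img c (oint p q)) (oint p q))
  (hcnt : exists x, oint p q x /\ c x <> x) :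
  nesting a b (c :: S) 2 tau /\
  ~ (forall f, In f (c :: S) -> diff1tau a b tau f).
Proof.
  split.
  - exact (part1 a b hab S hS tau htau p q hpq s hs hsum c hc hcomm hcJ hcnt).
  - exact (part2 a b hab S hS tau htau p q hpq s hs hsum c hc hcomm hcJ hcnt).
Qed.
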